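(* Let $V$ be a finite-dimensional complex vector space, $\dim V=N$, with a direct sum decomposition $V=U\oplus W$, and let $V_\bullet=\{0\subset V_1\subset\dots\subset V_N=V\}$ be a full flag in $V$. Then there exist bases $\{e_1,\dots,e_N\}$ and $\{v_1,\dots,v_N\}$ of $V$ such that $\{e_1,\dots,e_N\}$ is compatible with the decomposition $V=U\oplus W$, $\{v_1,\dots,v_N\}$ is compatible with the flag $V_\bullet$, and each vector $v_i$ is equal either to some $e_l$ or to a sum $e_j+e_k$ with $e_j\in U$ and $e_k\in W$.
   Context: A full flag $V_\bullet$ in $V$ is a chain of subspaces $0\subset V_1\subset\dots\subset V_N=V$ with $\dim V_i=i$. A basis of $V$ is compatible with the flag $V_\bullet$ if every $V_i$ is spanned by some subset of the basis. A basis of $V$ is compatible with the decomposition $V=U\oplus W$ if each basis vector lies in $U$ or in $W$. *)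

(* Defs.v *)
From HB Require Import structures.
From mathcomp Require Import all_boot all_order all_algebra.
Set Implicit Arguments. Unset Strict Implicit. Unset Printing Implicit Defensive.
Import GRing.Theory.
Local Open Scope ring_scope.

Section Defs.
Variables (F : fieldType) (V : vectType F).

Definition direct_decomposition (U W : {vspace V}) : Prop :=
  directv (U + W)%VS /\ (U + W)%VS = fullv.

(* Vs 0 ⊂ Vs 1 ⊂ ... ⊂ Vs N = V with dim (Vs i) = i (values of Vs beyond N
   are irrelevant). *)
Definition full_flag (N : nat) (Vs : nat -> {vspace V}) : Prop :=
  [/\ forall i, (i <= N)%N -> \dim (Vs i) = i,
      forall i, (i < N)%N -> (Vs i <= Vs i.+1)%VS
    & Vs N = fullv].

Definition flag_compatible (N : nat) (Vs : nat -> {vspace V})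
    (b : N.-tuple V) : Prop :=
  forall i, (i <= N)%N ->
    exists S : {set 'I_N}, Vs i = <<[seq tnth b j | j in S]>>%VS.

Definition decomp_compatible (U W : {vspace V}) (b : seq V) : Prop :=
  forall x, x \in b -> x \in U \/ x \in W.

End Defs.

(* Main.v *)
Require Import Defs.
From HB Require Import structures.
From mathcomp Require Import all_boot all_order all_algebra.
From Stdlib Require Import Lia.
Set Implicit Arguments. Unset Strict Implicit. Unset Printing Implicit Defensive.
Import GRing.Theory.
Local Open Scope ring_scope.

Section Aux.
Variables (F : fieldType) (V : vectType F).
Implicit Types (A B L M U W : {vspace V}) (X : nat -> {vspace V}).

Lemma dim_add_line A y : y \notin A -> \dim (A + <[y]>) = (\dim A).+1.
Proof.
move=> yA; rewrite dimv_disjoint_sum; last first.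
  apply/eqP; rewrite -subv0; apply/subvP=> x /memv_capP[xA /vlineP[k Ex]].
  move: xA; rewrite Ex memv0 => xA.
  case: (eqVneq k 0) => [->|k0]; first by rewrite scale0r.
  by case/negP: yA; rewrite -(scalerK k0 y) memvZ.
have y0 : y != 0 by apply: contraNneq yA => ->; rewrite mem0v.
by rewrite dim_vline y0 addn1.
Qed.

Lemma line_step A B y : (A <= B)%VS -> y \in B -> y \notin A ->
  \dim B = (\dim A).+1 -> B = (A + <[y]>)%VS.
Proof.
move=> AB yB yA dB; apply/eqP; rewrite eq_sym eqEdim subv_add AB -memvE yB /=.
by rewrite dim_add_line // dB.
Qed.

Lemma add_line_sub A B y : (A <= B)%VS -> y \in B -> (A + <[y]> <= B)%VS.
Proof. by move=> AB yB; rewrite subv_add AB -memvE. Qed.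

Lemma hyperplane L y : y \notin L ->
  exists M : {vspace V}, [/\ (L <= M)%VS, y \notin M &
     forall t, exists c : F, t - c *: y \in M].
Proof.
move=> yL; set C := (fullv :\: (L + <[y]>))%VS; exists (L + C)%VS.
have Ht t : exists c : F, t - c *: y \in (L + C)%VS.
  have : t \in (C + (L + <[y]>))%VS by rewrite addv_diff sumfv memvf.
  case/memv_addP=> d Cd [lz /memv_addP[l Ll [yz /vlineP[c ->] ->]]] ->.
  exists c; rewrite addrA addrK addrC; exact: memv_add.
split=> //; first exact: addvSl.
apply/negP=> yM.
have eqM : (L + C)%VS = fullv.
  apply/eqP; rewrite eqEsubv subvf /=; apply/subvP=> t _.
  have [c Hc] := Ht t; rewrite -(subrK (c *: y) t); apply: memvD => //.
  exact: memvZ.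
have e1 := dimv_sum_cap L C; rewrite eqM in e1.
have e2 := dimv_cap_compl fullv (L + <[y]>)%VS; rewrite capfv dim_add_line // -/C in e2.
move: e1 e2; set a := \dim L; set b := \dim C; set c := \dim (L :&: C); set d := \dim fullv.
move=> e1 e2; have : (a + b < a + b)%N by rewrite -[X in (_ < X)%N]e1 -e2 !addSn ltnS leq_addr.
by rewrite ltnn.
Qed.

Definition psum (p : V * V) := p.1 + p.2.

Definition flagP X m := (forall k, (k <= m)%N -> \dim (X k) = k) /\
  (forall k, (k < m)%N -> (X k <= X k.+1)%VS).

Record good U W X m (rows : seq (V * V)) (EU EW : seq V) : Prop := Good {
  g_size : size rows = m; g_fU : free EU; g_fW : free EW;
  g_EU : {subset EU <= U}; g_EW : {subset EW <= W};
  g_r1 : forall p, p \in rows -> (p.1 == 0) || (p.1 \in EU);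
  g_r2 : forall p, p \in rows -> (p.2 == 0) || (p.2 \in EW);
  g_span : forall k, (k <= m)%N -> X k = <<take k (map psum rows)>>%VS }.

Lemma flag_mono X m i j : flagP X m -> (i <= j)%N -> (j <= m)%N -> (X i <= X j)%VS.
Proof.
case=> _ sX; elim: j => [|j IH]; first by rewrite leqn0 => /eqP-> _; exact: subvv.
rewrite leq_eqVlt => /orP[/eqP-> _|]; first exact: subvv.
rewrite ltnS => ij jm; apply: subv_trans (IH ij (ltnW jm)) (sX _ jm).
Qed.

Lemma mem_ifc_head (a : V) E : (a == 0) || (a \in (if a == 0 then E else a :: E)).
Proof. by case: (a == 0); rewrite ?mem_head ?orbT. Qed.

Lemma mem_ifc (a x : V) E : (x == 0) || (x \in E) ->
  (x == 0) || (x \in (if a == 0 then E else a :: E)).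
Proof.
case: (a == 0) => //; case/orP=> [->//|H]; by rewrite in_cons H !orbT.
Qed.

Lemma glue1 U W U' W' X m rows EU EW a b :
 flagP X m.+1 -> (U' <= U)%VS -> (W' <= W)%VS -> good U' W' X m rows EU EW ->
 a \in U -> b \in W -> a + b \in X m.+1 -> a + b \notin X m ->
 (a == 0) || (a \notin U') -> (b == 0) || (b \notin W') ->
 exists rows' EU' EW', good U W X m.+1 rows' EU' EW'.
Proof.
case=> dX sX sU sW [sz fU fW EUs EWs r1 r2 sp] aU bW abX abH ha hb.
have EU'U : (<<EU>> <= U')%VS by apply/span_subvP.
have EW'W : (<<EW>> <= W')%VS by apply/span_subvP.
exists (rcons rows (a,b)), (if a == 0 then EU else a :: EU),
   (if b == 0 then EW else b :: EW).
split.
- by rewrite size_rcons sz.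
- case: (eqVneq a 0) ha => //= a0 aU'; rewrite free_cons fU andbT.
  by apply: contra aU' => /(subvP EU'U).
- case: (eqVneq b 0) hb => //= b0 bW'; rewrite free_cons fW andbT.
  by apply: contra bW' => /(subvP EW'W).
- move=> x; case: (eqVneq a 0) => _; first by move/EUs/(subvP sU).
  by rewrite in_cons => /orP[/eqP->//|/EUs/(subvP sU)].
- move=> x; case: (eqVneq b 0) => _; first by move/EWs/(subvP sW).
  by rewrite in_cons => /orP[/eqP->//|/EWs/(subvP sW)].
- move=> p; rewrite mem_rcons in_cons => /orP[/eqP->/=|/r1 h].
    exact: mem_ifc_head.
  exact: mem_ifc.
- move=> p; rewrite mem_rcons in_cons => /orP[/eqP->/=|/r2 h].
    exact: mem_ifc_head.
  exact: mem_ifc.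
- move=> k; rewrite leq_eqVlt => /orP[/eqP->|]; last first.
    rewrite ltnS => km; rewrite map_rcons -cats1 takel_cat ?size_map ?sz //.
    exact: sp.
  rewrite take_oversize; last by rewrite size_map size_rcons sz.
  rewrite map_rcons -cats1 span_cat span_seq1.
  have -> : <<map psum rows>>%VS = X m.
    by rewrite (sp m (leqnn m)) take_oversize // size_map sz.
  apply: line_step => //; first exact: sX.
  by rewrite (dX m.+1 (leqnn _)) (dX m (leqnSn _)).
Qed.

Lemma span_take_ins (s : seq V) p j x : (p <= size s)%N -> (p < j)%N ->
 <<take j (take p s ++ x :: drop p s)>>%VS = (<<take j.-1 s>> + <[x]>)%VS.
Proof.
move=> ps pj.
have j0 : (0 < j)%N by apply: leq_ltn_trans pj.
have pj1 : (p <= j.-1)%N by rewrite -ltnS prednK.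
rewrite take_cat size_takel // ltnNge (ltnW pj) /=.
have E : (j - p = (j.-1 - p).+1)%N by rewrite -subSn // prednK.
rewrite E /= span_cat span_cons.
have -> : take j.-1 s = take p s ++ take (j.-1 - p) (drop p s).
  by rewrite -takeD subnKC.
by rewrite span_cat [(<[x]> + _)%VS]addvC addvA.
Qed.

Lemma glue2 U W U' W' X Y m rows EU EW r u w :
 (0 < r)%N -> (r <= m)%N -> (U' <= U)%VS -> (W' <= W)%VS ->
 good U' W' Y m.-1 rows EU EW ->
 u \in U -> w \in W -> u \notin U' -> w \notin W' ->
 (forall j, (j < r)%N -> X j = Y j) ->
 (forall j, (r <= j)%N -> (j <= m)%N -> X j = (Y j.-1 + <[u + w]>)%VS) ->
 X m.+1 = (X m + <[w]>)%VS ->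
 exists rows' EU' EW', good U W X m.+1 rows' EU' EW'.
Proof.
move=> r0 rm sU sW [sz fU fW EUs EWs r1 r2 sp] uU wW uU' wW' R1 R2 R3.
have EU'U : (<<EU>> <= U')%VS by apply/span_subvP.
have EW'W : (<<EW>> <= W')%VS by apply/span_subvP.
set ins := take r.-1 rows ++ (u, w) :: drop r.-1 rows.
have m0 : (0 < m)%N by apply: leq_trans rm.
have szr : (r.-1 <= size rows)%N by rewrite sz -!subn1; apply: leq_sub2r.
have szi : size ins = m by rewrite size_cat /= size_takel // size_drop addnS subnKC // sz prednK.
have mi : map psum ins = take r.-1 (map psum rows) ++ (u + w) :: drop r.-1 (map psum rows).
  by rewrite map_cat /= map_take map_drop.
have Hk k : (k <= m)%N -> X k = <<take k (map psum ins)>>%VS.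
  move=> km; rewrite mi; case: (ltnP k r) => kr.
    rewrite takel_cat; last by rewrite size_takel ?size_map // -ltnS prednK.
    rewrite take_takel; last by rewrite -ltnS prednK.
    by rewrite R1 // sp // -ltnS prednK // (leq_trans kr rm).
  rewrite span_take_ins ?size_map //; last by rewrite prednK.
  rewrite R2 // sp //; by rewrite -!subn1; apply: leq_sub2r.
exists (rcons ins (0, w)), (u :: EU), (w :: EW).
split.
- by rewrite size_rcons szi.
- by rewrite free_cons fU andbT; apply: contra uU' => /(subvP EU'U).
- by rewrite free_cons fW andbT; apply: contra wW' => /(subvP EW'W).
- by move=> x; rewrite in_cons => /orP[/eqP->//|/EUs/(subvP sU)].
- by move=> x; rewrite in_cons => /orP[/eqP->//|/EWs/(subvP sW)].
- move=> p; rewrite mem_rcons in_cons => /orP[/eqP->/=|]; first by rewrite eqxx.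
  rewrite mem_cat in_cons => /or3P[/mem_take|/eqP->/=|/mem_drop].
  + by move/r1; case/orP=> [->//|H]; rewrite in_cons H !orbT.
  + by rewrite mem_head orbT.
  + by move/r1; case/orP=> [->//|H]; rewrite in_cons H !orbT.
- move=> p; rewrite mem_rcons in_cons => /orP[/eqP->/=|].
    by rewrite mem_head orbT.
  rewrite mem_cat in_cons => /or3P[/mem_take|/eqP->/=|/mem_drop].
  + by move/r2; case/orP=> [->//|H]; rewrite in_cons H !orbT.
  + by rewrite mem_head orbT.
  + by move/r2; case/orP=> [->//|H]; rewrite in_cons H !orbT.
- move=> k; rewrite leq_eqVlt => /orP[/eqP->|]; last first.
    rewrite ltnS => km; rewrite map_rcons -cats1 takel_cat ?size_map ?szi //.
    exact: Hk.
  rewrite take_oversize; last by rewrite size_map size_rcons szi.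
  rewrite map_rcons -cats1 span_cat span_seq1.
  have -> : <<map psum ins>>%VS = X m.
    by rewrite (Hk m (leqnn m)) take_oversize // size_map szi.
  by rewrite R3 /psum /= add0r.
Qed.


Lemma memv_addl (x : V) A B : x \in A -> x \in (A + B)%VS.
Proof. by move=> xA; rewrite -[x]addr0 memv_add ?mem0v. Qed.

Lemma memv_addr (x : V) A B : x \in B -> x \in (A + B)%VS.
Proof. by move=> xB; rewrite -[x]add0r memv_add ?mem0v. Qed.

Lemma id1 (h y w1 w : V) : w + w1 = h + (y + w1) + w - h - y.
Proof.
rewrite -addrA -opprD [h + (y + w1)]addrA -[h + y + w1 + w]addrA.
by rewrite addrC addKr addrC.
Qed.

Lemma id2 (p c u q w : V) : p + q - (u + w) = (p - u) + (q - w).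
Proof. by rewrite opprD addrACA. Qed.

Lemma decompP H U W h : (H <= U + W)%VS -> h \in H ->
  exists p q, [/\ p \in U, q \in W & h = p + q].
Proof.
move=> HUW /(subvP HUW)/memv_addP[p pU [q qW ->]]; by exists p, q.
Qed.

Lemma cap0 U W U' W' : (U :&: W = 0)%VS -> (U' <= U)%VS -> (W' <= W)%VS ->
  (U' :&: W' = 0)%VS.
Proof.
move=> dUW sU sW; apply/eqP; rewrite -subv0 -dUW; exact: capvS.
Qed.

Lemma notin_cap (x : V) A B : x \notin B -> x \notin (A :&: B)%VS.
Proof. by rewrite memv_cap => /negPf->; rewrite andbF. Qed.

Lemma good0 U W X : flagP X 0 -> good U W X 0 [::] [::] [::].
Proof.
case=> dX _; split => //; try exact: nil_free.
move=> k; rewrite leqn0 => /eqP->; rewrite take0 span_nil.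
by apply/eqP; rewrite -dimv_eq0 dX.
Qed.

Lemma flag_restr X m : flagP X m.+1 -> flagP X m.
Proof. by case=> dX sX; split=> k km; [apply: dX; apply: leqW| apply: sX; apply: ltnW]. Qed.

Lemma flag_new X m : flagP X m.+1 -> exists2 x, x \in X m.+1 & x \notin X m.
Proof.
case=> dX sX; apply/subvPn/negP => le; have := dimvS le.
by rewrite !dX // ltnn.
Qed.

Theorem G n : forall m, (m <= n)%N -> forall U W X, (U :&: W = 0)%VS ->
  flagP X m -> (X m <= U + W)%VS -> exists rows EU EW, good U W X m rows EU EW.
Proof.
elim: n => [|n IH] [|m] //; try by move=> _ U W X _ fX _; exists [::], [::], [::]; apply: good0.
rewrite ltnS => mn U W X dUW fX sXUW.
have fXm := flag_restr fX.
have [dX sX] := fX.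
set H := X m; set Xt := X m.+1.
have HXt : (H <= Xt)%VS by apply: sX.
have HUW : (H <= U + W)%VS by apply: subv_trans sXUW.
have IHm := IH m mn.
case GU: (Xt :&: U <= H)%VS; case GW: (Xt :&: W <= H)%VS.
-
  have [x xXt xH] := flag_new fX.
  have [a [b [aU bW Ex]]] := decompP sXUW xXt.
  have aHW : a \notin (H + W)%VS.
    apply/negP=> /memv_addP[h hH [w' w'W Ea]].
    have : x - h \in H.
      apply: (subvP GW); rewrite memv_cap memvB ?(subvP HXt _ hH) //=.
      by rewrite Ex Ea [h + w']addrC addrAC addrK memvD.
    by move=> xhH; case/negP: xH; rewrite -(subrK h x); apply: memvD.
  have bHU : b \notin (H + U)%VS.
    apply/negP=> /memv_addP[h hH [u' u'U Eb]].
    have : x - h \in H.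
      apply: (subvP GU); rewrite memv_cap memvB ?(subvP HXt _ hH) //=.
      by rewrite Ex Eb addrA addrAC addrK memvD.
    by move=> xhH; case/negP: xH; rewrite -(subrK h x); apply: memvD.
  have [MU [LMU aMU _]] := hyperplane aHW.
  have [MW [LMW bMW _]] := hyperplane bHU.
  have sHUW' : (H <= (U :&: MU) + (W :&: MW))%VS.
    apply/subvP=> h hH; have [p [q [pU qW Eh]]] := decompP HUW hH.
    have hM1 : h \in MU by apply: (subvP LMU); apply: memv_addl.
    have qM1 : q \in MU by apply: (subvP LMU); apply: memv_addr.
    have hM2 : h \in MW by apply: (subvP LMW); apply: memv_addl.
    have pM2 : p \in MW by apply: (subvP LMW); apply: memv_addr.
    rewrite Eh memv_add // memv_cap ?pU ?qW //=.
      have -> : p = h - q by rewrite Eh addrK.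
      exact: memvB.
    have -> : q = h - p by rewrite Eh addrC addKr.
    exact: memvB.
  have [rows [EU [EW g]]] := IHm _ _ _ (cap0 dUW (capvSl _ _) (capvSl _ _)) fXm sHUW'.
  apply: (glue1 fX (capvSl _ _) (capvSl _ _) g aU bW); rewrite -?Ex //.
    by rewrite notin_cap ?orbT.
  by rewrite notin_cap ?orbT.
-
  have /subvPn[b] := negbT GW; rewrite memv_cap => /andP[bXt bW] bH.
  have bHU : b \notin (H + U)%VS.
    apply/negP=> /memv_addP[h hH [u' u'U Eb]].
    have : b - h \in H.
      apply: (subvP GU); rewrite memv_cap memvB ?(subvP HXt _ hH) //=.
      by rewrite Eb addrC addKr.
    by move=> xhH; case/negP: bH; rewrite -(subrK h b); apply: memvD.
  have [MW [LMW bMW _]] := hyperplane bHU.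
  have sHUW' : (H <= U + (W :&: MW))%VS.
    apply/subvP=> h hH; have [p [q [pU qW Eh]]] := decompP HUW hH.
    have hM2 : h \in MW by apply: (subvP LMW); apply: memv_addl.
    have pM2 : p \in MW by apply: (subvP LMW); apply: memv_addr.
    rewrite Eh memv_add // memv_cap ?qW //=.
    have -> : q = h - p by rewrite Eh addrC addKr.
    exact: memvB.
  have [rows [EU [EW g]]] := IHm _ _ _ (cap0 dUW (subvv _) (capvSl _ _)) fXm sHUW'.
  apply: (glue1 fX (subvv _) (capvSl _ _) g (mem0v _) bW); rewrite ?add0r ?eqxx //.
  by rewrite notin_cap ?orbT.
-
  have /subvPn[a] := negbT GU; rewrite memv_cap => /andP[aXt aU] aH.
  have aHW : a \notin (H + W)%VS.
    apply/negP=> /memv_addP[h hH [w' w'W Ea]].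
    have : a - h \in H.
      apply: (subvP GW); rewrite memv_cap memvB ?(subvP HXt _ hH) //=.
      by rewrite Ea addrC addKr.
    by move=> xhH; case/negP: aH; rewrite -(subrK h a); apply: memvD.
  have [MU [LMU aMU _]] := hyperplane aHW.
  have sHUW' : (H <= (U :&: MU) + W)%VS.
    apply/subvP=> h hH; have [p [q [pU qW Eh]]] := decompP HUW hH.
    have hM1 : h \in MU by apply: (subvP LMU); apply: memv_addl.
    have qM1 : q \in MU by apply: (subvP LMU); apply: memv_addr.
    rewrite Eh memv_add // memv_cap ?pU //=.
    have -> : p = h - q by rewrite Eh addrK.
    exact: memvB.
  have [rows [EU [EW g]]] := IHm _ _ _ (cap0 dUW (capvSl _ _) (subvv _)) fXm sHUW'.
  apply: (glue1 fX (capvSl _ _) (subvv _) g aU (mem0v _)); rewrite ?addr0 ?eqxx ?orbT //.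
  by rewrite notin_cap ?orbT.
-
  have /subvPn[a] := negbT GU; rewrite memv_cap => /andP[aXt aU] aH.
  have /subvPn[b] := negbT GW; rewrite memv_cap => /andP[bXt bW] bH.
  have dXt : \dim Xt = (\dim H).+1 by rewrite /Xt /H !dX.
  have EXt : Xt = (H + <[a]>)%VS by apply: line_step.
  set P := fun k => ~~ (Xt :&: W :&: (X k + U) <= H)%VS.
  have Pm : P m.
    apply/subvPn; exists b => //; rewrite !memv_cap bXt bW /=.
    move: bXt; rewrite EXt => /memv_addP[h hH [t /vlineP[c ->] ->]].
    by rewrite memv_add // memvZ.
  have Xm0 : forall k, (k <= m.+1)%N -> (0 <= X k)%VS by move=> *; exact: sub0v.
  have X0 : X 0 = 0%VS by apply/eqP; rewrite -dimv_eq0 dX.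
  have exP : exists k, P k by exists m.
  case: (ex_minnP exP) => r Pr rmin.
  have r0 : (0 < r)%N.
    rewrite lt0n; apply/negP=> /eqP r0; move: Pr; rewrite r0 /P X0 add0v.
    rewrite -capvA [(W :&: U)%VS]capvC dUW.
    by move/negP; apply; apply: subv_trans (capvSr _ _) (sub0v _).
  have rm : (r <= m)%N by apply: rmin.
  have notP : ~ P r.-1.
    by move/rmin; rewrite leqNgt ltn_predL r0.
  case/subvPn: Pr => w; rewrite !memv_cap => /andP[/andP[wXt wW] wXU] wH.
  case/memv_addP: wXU => z zXr [u1 u1U Ew].
  set u := - u1.
  have uU : u \in U by rewrite memvN.
  have Ez : z = u + w by rewrite Ew /u addrC addrK.
  have Xr1H : forall k, (k <= r)%N -> (X k <= H)%VS.
    by move=> k kr; apply: (flag_mono fXm) => //; apply: leq_trans rm.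
  have zH : z \in H by apply: (subvP (Xr1H _ (leqnn _))).
  have zX1 : z \notin X r.-1.
    apply/negP=> zX1; apply: notP; apply/subvPn; exists w => //.
    by rewrite !memv_cap wXt wW /= Ew memv_add.
  set L := (H + (U :&: (X r.-1 + W)))%VS.
  have uL : u \notin L.
    apply/negP=> /memv_addP[h hH [p /memv_capP[pU /memv_addP[y yX [w1 w1W Ep]]] Eu]].
    have E1 : w + w1 = z - h - y.
      by rewrite Ez Eu Ep; exact: id1.
    have yH : y \in H by apply: (subvP (Xr1H _ (leq_pred r))) yX.
    have ww1H : w + w1 \in H by rewrite E1; apply: memvB => //; apply: memvB.
    have nw1Xt : - w1 \in Xt.
      have -> : - w1 = w - (w + w1) by rewrite opprD addrA subrr add0r.
      by apply: memvB => //; apply: (subvP HXt).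
    have nw1XU : - w1 \in (X r.-1 + U)%VS.
      have -> : - w1 = y - p by rewrite Ep opprD addrA subrr add0r.
      by apply: memv_add => //; rewrite memvN.
    apply: notP; apply/subvPn; exists (- w1).
      by rewrite !memv_cap nw1Xt memvN w1W nw1XU.
    apply/negP=> nw1H; case/negP: wH.
    have -> : w = (w + w1) + - w1 by rewrite addrK.
    exact: memvD.
  have [M [LM uM hypM]] := hyperplane uL.
  have HM : (H <= M)%VS by apply: subv_trans LM; apply: addvSl.
  have zM : z \in M by apply: (subvP HM).
  have wM : w \notin M.
    apply/negP=> wM; case/negP: uM.
    have -> : u = z - w by rewrite Ez addrK.
    exact: memvB.
  set U' := (U :&: M)%VS; set W' := (W :&: M)%VS; set Z := (U' + W')%VS.
  have F2 : forall h, h \in H -> exists c : F, h - c *: z \in Z.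
    move=> h hH; have [p [q [pU qW Eh]]] := decompP HUW hH.
    have [c Hc] := hypM p; exists c.
    have E2 : h - c *: z = (p - c *: u) + (q - c *: w).
      by rewrite Eh Ez scalerDr id2.
    have hM : h \in M by apply: (subvP HM).
    have czM : c *: z \in M by apply: memvZ.
    have qM : q - c *: w \in M.
      have -> : q - c *: w = (h - c *: z) - (p - c *: u) by rewrite E2 [in RHS]addrC addKr.
      by apply: memvB => //; apply: memvB.
    rewrite E2; apply: memv_add; rewrite /U' /W' memv_cap ?Hc ?qM andbT.
      by apply: memvB => //; apply: memvZ.
    by apply: memvB => //; apply: memvZ.
  have F3 : (X r.-1 <= Z)%VS.
    apply/subvP=> y yX; have yH : y \in H by apply: (subvP (Xr1H _ (leq_pred r))) yX.
    have [p [q [pU qW Ey]]] := decompP HUW yH.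
    have pL : p \in L.
      apply: memv_addr; rewrite memv_cap pU /=.
      have -> : p = y + - q by rewrite Ey addrK.
      by apply: memv_add => //; rewrite memvN.
    have pM : p \in M by apply: (subvP LM).
    have qM : q \in M.
      have -> : q = y - p by rewrite Ey addrC addKr.
      by apply: memvB => //; apply: (subvP HM).
    by rewrite Ey; apply: memv_add; rewrite /U' /W' memv_cap ?pU ?qW.
  have dUW' : directv (U + W) by apply/directv_addP.
  have F4 : z \notin Z.
    apply/negP=> /memv_addP[p' /memv_capP[p'U p'M] [q' /memv_capP[q'W q'M] Ez']].
    move: Ez'; rewrite Ez => /eqP; rewrite (directv_add_unique dUW') //.
    by case/eqP=> Eu' _; case/negP: uM; rewrite Eu'.
  have m0 : (0 < m)%N := leq_trans r0 rm.
  have zXj : forall j, (r <= j)%N -> (j <= m)%N -> z \in X j.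
    by move=> j rj jm; apply: (subvP (flag_mono fXm rj jm)).
  have MOD : forall j, (r <= j)%N -> (j <= m)%N -> X j = (X j :&: Z + <[z]>)%VS.
    move=> j rj jm; apply/eqP; rewrite eqEsubv; apply/andP; split; last first.
      by apply: add_line_sub; [apply: capvSl| apply: zXj].
    apply/subvP=> x xX.
    have xH : x \in H by apply: (subvP (flag_mono fXm jm (leqnn m))).
    have [c Hc] := F2 x xH.
    have -> : x = (x - c *: z) + c *: z by rewrite subrK.
    apply: memv_add; last by rewrite memvZ ?memv_line.
    rewrite memv_cap Hc andbT; apply: memvB => //; apply: memvZ; exact: zXj.
  have dcap : forall j, (r <= j)%N -> (j <= m)%N -> \dim (X j :&: Z) = j.-1.
    move=> j rj jm; have := dX j (leqW jm); rewrite {1}(MOD j rj jm) dim_add_line.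
      by move=> E; rewrite -[in RHS]E.
    by rewrite memv_cap negb_and F4 orbT.
  set Y := fun k => if (k < r)%N then X k else (X k.+1 :&: Z)%VS.
  have fY : flagP Y m.-1.
    split.
    - move=> k km1; rewrite /Y; case: ltnP => kr.
        by apply: dX; apply: leq_trans km1 _; apply: leq_trans (leq_pred m) (leqnSn m).
      rewrite dcap //; first exact: leqW.
      by move: km1; rewrite -ltnS prednK.
    - move=> k km1; rewrite /Y; case: (ltnP k r) => kr; case: (ltnP k.+1 r) => k1r.
      + apply: sX; apply: leq_trans km1 _; apply: leq_trans (leq_pred m) (leqnSn m).
      + have km : (k.+2 <= m)%N by move: km1; rewrite -ltnS prednK.
        have kr1 : (k <= r.-1)%N by rewrite -ltnS prednK.
        rewrite subv_cap; apply/andP; split.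
          exact: (flag_mono fX (leq_trans (leqnSn k) (leqnSn _)) (leqW km)).
        apply: subv_trans F3; apply: (flag_mono fX kr1).
        exact: leq_trans (leq_pred r) (leqW rm).
      + by rewrite ltnNge (leq_trans kr (leqnSn k)) in k1r.
      + apply: capvS (subvv _); apply: sX.
        by move: km1; rewrite -ltnS prednK // => /leqW.
  have YZ : (Y m.-1 <= U' + W')%VS.
    rewrite /Y; case: ltnP => h; last exact: capvSr.
    apply: subv_trans F3; apply: (flag_mono fX).
      by rewrite -ltnS (prednK r0).
    exact: leq_trans (leq_pred r) (leqW rm).
  have dU'W' : (U' :&: W' = 0)%VS by apply: cap0 dUW (capvSl _ _) (capvSl _ _).
  have [rows [EU [EW g]]] := IH m.-1 (leq_trans (leq_pred m) mn) _ _ _ dU'W' fY YZ.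
  apply: (glue2 r0 rm (capvSl U M) (capvSl W M) g uU wW).
  - exact: notin_cap.
  - exact: notin_cap.
  - by move=> j jr; rewrite /Y jr.
  - move=> j rj jm; rewrite -Ez /Y; case: (eqVneq j r) => [->|jr].
      rewrite ltn_predL r0; apply: line_step => //.
        by have := sX r.-1; rewrite prednK //; apply; apply: leq_trans rm _.
      by rewrite !dX ?prednK // ?(leq_trans (leq_pred r)) //; apply: leq_trans rm _.
    have rj' : (r < j)%N by rewrite ltn_neqAle eq_sym jr rj.
    rewrite ltnNge -ltnS prednK ?rj' ?(leq_ltn_trans _ rj') //=.
    exact: MOD.
  - exact: line_step.
Qed.

End Aux.

Unset Implicit Arguments.

Theorem lemma1 (F : fieldType) (V : vectType F) (N : nat)
    (hN : \dim (fullv : {vspace V}) = N)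
    (U W : {vspace V}) (hUW : direct_decomposition U W)
    (Vs : nat -> {vspace V}) (hflag : full_flag N Vs) :
  exists (e v : N.-tuple V),
    [/\ basis_of fullv e, basis_of fullv v,
        decomp_compatible U W e,
        flag_compatible Vs v
      & forall i : 'I_N,
          (exists l : 'I_N, tnth v i = tnth e l) \/
          (exists j k : 'I_N, [/\ tnth e j \in U, tnth e k \in W
                                & tnth v i = tnth e j + tnth e k])].
Proof.
case: hUW => dUW' UWf; have dUW := directv_addP dUW'.
case: hflag => dV sV VN.
have fX : flagP Vs N by split.
have sXUW : (Vs N <= U + W)%VS by rewrite VN UWf subvv.
have [rows [EU [EW [sz fU fW EUs EWs r1 r2 sp]]]] := G (leqnn N) dUW fX sXUW.
have bU : basis_of U (EU ++ vbasis (U :\: <<EU>>)).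
  have SU : (<<EU>> <= U)%VS by apply/span_subvP.
  have EQ : (<<EU>> + (U :\: <<EU>>))%VS = U.
    by rewrite addvC addv_diff; apply/addv_idPl.
  suff : basis_of (<<EU>> + (U :\: <<EU>>))%VS (EU ++ vbasis (U :\: <<EU>>)) by rewrite EQ.
  apply: cat_basis; last exact: vbasisP.
    by apply/directv_addP; rewrite capvC capv_diff.
  by rewrite /basis_of eqxx fU.
have bW : basis_of W (EW ++ vbasis (W :\: <<EW>>)).
  have SW : (<<EW>> <= W)%VS by apply/span_subvP.
  have EQ : (<<EW>> + (W :\: <<EW>>))%VS = W.
    by rewrite addvC addv_diff; apply/addv_idPl.
  suff : basis_of (<<EW>> + (W :\: <<EW>>))%VS (EW ++ vbasis (W :\: <<EW>>)) by rewrite EQ.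
  apply: cat_basis; last exact: vbasisP.
    by apply/directv_addP; rewrite capvC capv_diff.
  by rewrite /basis_of eqxx fW.
set e := (EU ++ vbasis (U :\: <<EU>>)) ++ (EW ++ vbasis (W :\: <<EW>>)).
have be : basis_of fullv e by rewrite -UWf; apply: cat_basis.
have sze : size e == N.
  by case/andP: be => /eqP Es /eqnP <-; rewrite Es hN.
set v := map (@psum F V) rows.
have szv : size v == N by rewrite size_map sz.
have vfull : <<v>>%VS = fullv by rewrite -VN sp // take_oversize // size_map sz.
have bv : basis_of fullv v by rewrite basisEdim vfull subvv /= (eqP szv) hN.
exists (Tuple sze), (Tuple szv); split => //.
- move=> x /=; rewrite mem_cat => /orP[xe|xe].
    by left; apply: basis_mem bU xe.
  by right; apply: basis_mem bW xe.
- move=> i iN; exists [set j : 'I_N | (j < i)%N].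
  rewrite sp // -/v; apply: eq_span => x; apply/idP/idP.
    case/(nthP 0); rewrite size_takel ?size_map ?sz // => k ki <-.
    have kN : (k < N)%N by apply: leq_trans ki iN.
    apply/imageP; exists (Ordinal kN); first by rewrite inE.
    by rewrite (tnth_nth 0) /= nth_take.
  case/imageP=> j; rewrite inE => ji ->; rewrite (tnth_nth 0) /= -(nth_take 0 ji).
  by apply: mem_nth; rewrite size_takel // size_map sz.
- move=> i.
  have iv : (i < size rows)%N by rewrite sz.
  set p := nth (0, 0) rows i.
  have prow : p \in rows by apply: mem_nth.
  have Evi : tnth (Tuple szv) i = p.1 + p.2 by rewrite (tnth_nth 0) /= (nth_map (0,0)).
  have inE' x : x \in e -> exists l : 'I_N, x = tnth (Tuple sze) l.
    by move=> xe; apply/tnthP.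
  have EUe x : x \in EU -> x \in e by move=> xE; rewrite !mem_cat xE.
  have EWe x : x \in EW -> x \in e by move=> xE; rewrite !mem_cat xE !orbT.
  have vi0 : tnth (Tuple szv) i != 0.
    apply: (free_not0 (basis_free bv)); exact: mem_tnth.
  case/orP: (r1 _ prow) => [/eqP p10|p1E]; case/orP: (r2 _ prow) => [/eqP p20|p2E].
  + by move: vi0; rewrite Evi p10 p20 addr0 eqxx.
  + left; have [l El] := inE' _ (EWe _ p2E); exists l.
    by rewrite Evi p10 add0r El.
  + left; have [l El] := inE' _ (EUe _ p1E); exists l.
    by rewrite Evi p20 addr0 El.
  + right; have [j Ej] := inE' _ (EUe _ p1E); have [k Ek] := inE' _ (EWe _ p2E).
    exists j, k; rewrite -Ej -Ek; split => //.
      exact: EUs.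
    exact: EWs.
Qed.
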